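(* Let $X$ be a $T_1$ space and $\mathcal{P}$ an ideal of closed subsets of $X$. Let $\mathcal{P}'$ be the ideal of all closed subsets of $X$ contained in the set of isolated points of $X$. Then $C(X)_\mathcal{P}=C(X)$ if and only if $\mathcal{P}\subseteq\mathcal{P}'$.
   Context: An ideal of closed subsets of $X$ is a family $\mathcal{P}$ of closed subsets closed under finite unions and under passing to closed subsets. $D_f$ is the set of discontinuity points of $f\in\mathbb{R}^X$; $C(X)_\mathcal{P}=\{f\in\mathbb{R}^X\colon\overline{D_f}\in\mathcal{P}\}$; $C(X)$ is the ring of continuous real-valued functions on $X$. *)

(* Defs.v *)
From HB Require Import structures.
From mathcomp Require Import all_boot all_order all_algebra.
From mathcomp Require Import all_classical all_reals all_analysis.
Set Implicit Arguments. Unset Strict Implicit. Unset Printing Implicit Defensive.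
Import Order.TTheory GRing.Theory Num.Theory.
Import numFieldNormedType.Exports.
Local Open Scope classical_set_scope.

Definition closed_ideal (X : topologicalType) (P : set (set X)) : Prop :=
  [/\ P !=set0,
      (forall A, P A -> closed A),
      (forall A B, P A -> P B -> P (A `|` B)) &
      (forall A B, P A -> closed B -> B `<=` A -> P B)].

Definition discont (X : topologicalType) (R : realType) (f : X -> R) : set X :=
  [set x : X | ~ {for x, continuous (f : X -> R^o)}].

Definition CP (X : topologicalType) (R : realType) (P : set (set X)) : set (X -> R) :=
  [set f | P (closure (discont f))].

Definition CX (X : topologicalType) (R : realType) : set (X -> R) :=
  [set f | continuous f].

Definition Pisol (X : topologicalType) : set (set X) :=
  [set A | closed A /\ A `<=` isolated [set: X]].

(* Main.v *)
Require Import Defs.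
From mathcomp Require Import all_boot all_order all_algebra.
From mathcomp Require Import all_classical all_reals all_analysis.
Local Open Scope classical_set_scope.
Import Order.TTheory GRing.Theory Num.Theory.
Local Open Scope ring_scope.
Local Open Scope classical_set_scope.

Lemma open_neq0 (R : realType) : open (~` [set (0:R^o)]).
Proof.
rewrite openC; apply: accessible_closed_set1; apply: hausdorff_accessible.
exact: Rhausdorff.
Qed.

Lemma cont_isolated (R : realType) (X : topologicalType) (f : X -> R) x :
  isolated [set: X] x -> {for x, continuous (f : X -> R^o)}.
Proof.
move=> [_ [V Vx VE]] U /= Ufx.
apply: (@filterS _ _ _ V) Vx => y Vy /=.
have : [set x] y by rewrite -VE; split.
rewrite /set1 /= => yx; subst y; exact: (nbhs_singleton Ufx).
Qed.

Theorem theorem2p1 (R : realType) (X : topologicalType) (P : set (set X)) :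
  accessible_space X -> closed_ideal P ->
  (@CP X R P = @CX X R <-> P `<=` @Pisol X).
Proof.
move=> T1 [[A0 PA0] Pcl PU PS]; split.
- move=> E A PA; split; first exact: Pcl.
  move=> x Ax; apply/not_notP => nix.
  pose f : X -> R := fun y => if y == x then 1 else 0.
  have Df : discont f = [set x].
    apply/seteqP; split => y /=.
    + move=> ny; apply/eqP/negP => /negP yx; apply: ny.
      have [B [oB By nBx]] := T1 _ _ yx.
      move=> U /= Ufy; have : nbhs y B by apply: open_nbhs_nbhs; split => //; exact/set_mem.
      apply: filterS => z Bz /=.
      have -> : f z = f y.
        rewrite /f (negbTE yx); case: eqP => // zx.
        by move: nBx; rewrite zx in Bz; rewrite in_setC => /negP; rewrite inE.
      exact: (nbhs_singleton Ufy).
    + move=> -> cx; apply: nix; split; first exact: in_setT.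
      have : nbhs (f x : R^o) (~` [set (0:R^o)]).
        apply: open_nbhs_nbhs; split; first exact: open_neq0.
        by rewrite /f eqxx /=; apply/eqP; exact: oner_neq0.
      move/cx => /= Vx; exists (f @^-1` (~` [set (0:R^o)])) => //.
      apply/seteqP; split => z /=.
      * by move=> [+ _]; rewrite /f; case: eqP.
      * by move=> ->; split => //; rewrite /f eqxx; apply/eqP; exact: oner_neq0.
  have : @CP X R P f.
    rewrite /CP /= Df -(proj1 (closure_id _)); last exact: accessible_closed_set1.
    apply: (PS A) => //; first exact: accessible_closed_set1.
    by move=> z ->.
  rewrite E /CX /= => cf.
  have : discont f x by rewrite Df.
  by apply; apply: cf.
- move=> sub; apply/seteqP; split => f /=.
  + rewrite /CP /CX /= => Pf x; apply/not_notP => nfx.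
    have [_ /(_ x)] := sub _ Pf.
    have dx : discont f x by [].
    move=> /(_ (subset_closure dx)) ix; apply: nfx.
    exact: cont_isolated.
  + rewrite /CX /CP /= => cf.
    have -> : discont f = set0.
      by apply/seteqP; split => x //= []; apply: cf.
    rewrite closure0; apply: (PS A0) => //; exact: closed0.
Qed.
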